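(* Let $\Omega=[a,b)\times[c,d)$ with periodic boundary conditions, $\mathcal{N}_x,\mathcal{N}_y$ positive even integers, $h_x=(b-a)/\mathcal{N}_x$, $h_y=(d-c)/\mathcal{N}_y$, grid points $(x_j,y_k)=(a+jh_x,c+kh_y)$, and grid functions stored as vectors of length $\mathcal{N}_x\mathcal{N}_y$. Let $\mu_x=2\pi/(b-a)$, $\mu_y=2\pi/(d-c)$ and let $\mathbf{D}_2^x$ be the $\mathcal{N}_x\times\mathcal{N}_x$ matrix with $(\mathbf{D}_2^x)_{j,k}=\tfrac12\mu_x^2(-1)^{j+k+1}\csc^2\!\big(\mu_x\tfrac{x_j-x_k}{2}\big)$ for $j\ne k$ and $(\mathbf{D}_2^x)_{j,j}=-\mu_x^2\tfrac{\mathcal{N}_x^2+2}{12}$, and $\mathbf{D}_2^y$ analogously; set $\Delta_h=\mathbf{I}_y\otimes\mathbf{D}_2^x+\mathbf{D}_2^y\otimes\mathbf{I}_x$. Define $\langle u,w\rangle_h=h_xh_y\sum_{j,k}u_{j,k}\bar w_{j,k}$, and let $\cdot$ denote the elementwise product, $|w|^2=w\cdot\bar w$. Let $\varepsilon>0$, $\tau>0$, and let $b_i,a_{ij}$ ($i,j=1,\dots,s$) be real numbers with $b_ia_{ij}+b_ja_{ji}=b_ib_j$ for all $i,j$. Consider the fully discrete scheme: given grid vectors $E^n$ (complex), $N^n,v^n,q^n$ (real), for $i=1,\dots,s$, \[ \begin{aligned} &E_{ni}=E^n+\tau\sum_j a_{ij}k_j^1,\quad k_i^1={\rm i}\big(\Delta_hE_{ni}-\varepsilon^2\Delta_h^2E_{ni}-N_{ni}\cdot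 E_{ni}\big),\\ &N_{ni}=N^n+\tau\sum_j a_{ij}k_j^2,\quad k_i^2=\Delta_hv_{ni},\\ &v_{ni}=v^n+\tau\sum_j a_{ij}k_j^3,\quad k_i^3=N_{ni}-\varepsilon^2\Delta_hN_{ni}+q^n+\tau\sum_j a_{ij}k_j^4,\quad k_i^4=2\,{\rm Re}\big(\bar E_{ni}\cdot k_i^1\big), \end{aligned} \] with update $E^{n+1}=E^n+\tau\sum_ib_ik_i^1$, $N^{n+1}=N^n+\tau\sum_ib_ik_i^2$, $v^{n+1}=v^n+\tau\sum_ib_ik_i^3$, $q^{n+1}=q^n+\tau\sum_ib_ik_i^4$, and initial data $E^0$, $N^0$ the grid values of $E_0,N_0$, $v^0$ the zero-mean solution of $\Delta_hv^0=N_1$ on the grid, and $q^0=|E^0|^2$. Assume the stage equations are solvable at every step. Then for all $n=0,1,\dots,J$: (i) $\langle E^{n+1},E^{n+1}\rangle_h=\langle E^n,E^n\rangle_h$; (ii) $q^n-|E^n|^2=\mathbf{0}$; (iii) $\mathcal{H}_h^{n+1}=\mathcal{H}_h^n$, where \[ \mathcal{H}_h^n=\langle\Delta_hE^n,E^n\rangle_h-\varepsilon^2\langle\Delta_hE^n,\Delta_hE^n\rangle_h-\tfrac12\langle N^n,N^n\rangle_h+\tfrac{\varepsilon^2}{2}\langle\Delta_hN^n,N^n\rangle_h-\langle N^n,|E^n|^2\rangle_h+\tfrac12\langle\Delta_hv^n,v^n\rangle_h. \]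
   Context: This is the Runge–Kutta Fourier pseudo-spectral discretization of the quantum Zakharov system ${\rm i}E_t+\Delta E-\varepsilon^2\Delta^2E=NE$, $N_{tt}-\Delta N+\varepsilon^2\Delta^2N=\Delta|E|^2$, reformulated with $N_t=\Delta v$ and the quadratic auxiliary variable $q=|E|^2$; $\Delta_h$ is the Fourier pseudo-spectral discrete Laplacian. The initial datum $N_1$ satisfies $\int_\Omega N_1=0$. $J$ is the number of time steps. *)

(* Defs.v *)
From HB Require Import structures.
From mathcomp Require Import all_boot all_order all_algebra.
From mathcomp Require Import complex.
From mathcomp Require Import reals trigo.
Set Implicit Arguments. Unset Strict Implicit. Unset Printing Implicit Defensive.
Import Order.TTheory GRing.Theory Num.Theory.
Local Open Scope ring_scope.
Local Open Scope complex_scope.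

Section ZakharovDefs.
Variable R : realType.

Definition toC (r : R) : R[i] := r%:C.
Definition cmx (m n : nat) (U : 'M[R]_(m, n)) : 'M[R[i]]_(m, n) := map_mx toC U.

Definition D2 (a b : R) (n : nat) : 'M[R]_n :=
  let mu := 2 * pi / (b - a) in
  let h := (b - a) / n%:R in
  let x (j : 'I_n) := a + j%:R * h in
  \matrix_(j, k)
    if j == k then - mu ^+ 2 * ((n%:R ^+ 2 + 2) / 12)
    else (1 / 2) * mu ^+ 2 * (-1) ^+ (j + k + 1)%N
         / (sin (mu * ((x j - x k) / 2))) ^+ 2.

(* Grid functions on the Nx x Ny grid are stored as Nx x Ny matrices,
   U j k = value at (x_j, y_k).  Under the column-stacking vectorization
   (x index fastest), Delta_h = I_y (x) D2x + D2y (x) I_x acts as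
   U |-> D2x U + U D2y^T. *)
Definition lapR (a b c d : R) (Nx Ny : nat) (U : 'M[R]_(Nx, Ny)) : 'M[R]_(Nx, Ny) :=
  D2 a b Nx *m U + U *m (D2 c d Ny)^T.

Definition lapC (a b c d : R) (Nx Ny : nat) (U : 'M[R[i]]_(Nx, Ny))
  : 'M[R[i]]_(Nx, Ny) :=
  cmx (D2 a b Nx) *m U + U *m (cmx (D2 c d Ny))^T.

Definition emul (T : pzRingType) (m n : nat) (A B : 'M[T]_(m, n)) : 'M[T]_(m, n) :=
  \matrix_(j, k) (A j k * B j k).
Definition cconj_mx (m n : nat) (A : 'M[R[i]]_(m, n)) : 'M[R[i]]_(m, n) :=
  map_mx (@conjc R) A.
Definition abs2 (m n : nat) (A : 'M[R[i]]_(m, n)) : 'M[R[i]]_(m, n) :=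
  emul A (cconj_mx A).

Definition ip_h (hx hy : R) (m n : nat) (U W : 'M[R[i]]_(m, n)) : R[i] :=
  (hx * hy)%:C * \sum_(j < m) \sum_(k < n) U j k * (W j k)^*.

Definition grid (T : Type) (a b c d : R) (Nx Ny : nat) (f : R -> R -> T)
  : 'M[T]_(Nx, Ny) :=
  \matrix_(j, k) f (a + j%:R * ((b - a) / Nx%:R)) (c + k%:R * ((d - c) / Ny%:R)).

Definition Ham (a b c d eps : R) (Nx Ny : nat)
    (E : 'M[R[i]]_(Nx, Ny)) (N v : 'M[R]_(Nx, Ny)) : R[i] :=
  let hx := (b - a) / Nx%:R in
  let hy := (d - c) / Ny%:R in
  let ip := @ip_h hx hy Nx Ny in
  let LE := lapC a b c d E in
  ip LE E - (eps ^+ 2)%:C * ip LE LE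
  - (1 / 2)%:C * ip (cmx N) (cmx N)
  + (eps ^+ 2 / 2)%:C * ip (cmx (lapR a b c d N)) (cmx N)
  - ip (cmx N) (abs2 E)
  + (1 / 2)%:C * ip (cmx (lapR a b c d v)) (cmx v).

End ZakharovDefs.

(* Main.v *)
Require Import Defs.
From mathcomp Require Import ring.
From HB Require Import structures.
From mathcomp Require Import all_boot all_order all_algebra.
From mathcomp Require Import complex.
From mathcomp Require Import reals trigo.
Import Order.TTheory GRing.Theory Num.Theory.
Local Open Scope ring_scope.
Local Open Scope complex_scope.

Section RK.
Variable R : realType.
Variables m n : nat.
Local Notation V := 'M[R[i]]_(m, n).

Lemma rk_quad (h : V -> V -> R[i])
  (hDl : forall x y z, h (x + y) z = h x z + h y z)
  (hDr : forall x y z, h x (y + z) = h x y + h x z)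
  (hZl : forall (r : R) x z, h (r%:C *: x) z = r%:C * h x z)
  (hZr : forall (r : R) x z, h x (r%:C *: z) = r%:C * h x z)
  (s : nat) (cb : 'I_s -> R) (ca : 'I_s -> 'I_s -> R)
  (cond : forall i j, cb i * ca i j + cb j * ca j i = cb i * cb j)
  (x0 z0 : V) (k l : 'I_s -> V) :
  h (x0 + \sum_i (cb i)%:C *: k i) (z0 + \sum_i (cb i)%:C *: l i) - h x0 z0
  = \sum_i (cb i)%:C * (h (k i) (z0 + \sum_j (ca i j)%:C *: l j)
                        + h (x0 + \sum_j (ca i j)%:C *: k j) (l i)).
Proof.
have h0l z : h 0 z = 0.
  by have e := hDl 0 0 z; rewrite addr0 in e; apply: (addrI (h 0 z)); rewrite addr0 -e.
have h0r z : h z 0 = 0.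
  by have e := hDr z 0 0; rewrite addr0 in e; apply: (addrI (h z 0)); rewrite addr0 -e.
have hsuml (F : 'I_s -> V) z : h (\sum_i F i) z = \sum_i h (F i) z.
  by rewrite (big_morph (fun x => h x z) (fun x y => hDl x y z) (h0l z)).
have hsumr (F : 'I_s -> V) z : h z (\sum_i F i) = \sum_i h z (F i).
  by rewrite (big_morph (fun x => h z x) (fun x y => hDr z x y) (h0r z)).
rewrite hDl !hDr !hsuml !hsumr.
under [in RHS]eq_bigr do rewrite !hDr !hDl !hsuml !hsumr.
have key : \sum_i h ((cb i)%:C *: k i) (\sum_j (cb j)%:C *: l j)
  = \sum_i (cb i)%:C * \sum_j h (k i) ((ca i j)%:C *: l j)
   + \sum_i (cb i)%:C * \sum_j h ((ca i j)%:C *: k j) (l i).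
  under [in RHS]eq_bigr do rewrite mulr_sumr.
  under [X in _ = _ + X]eq_bigr do rewrite mulr_sumr.
  rewrite [X in _ = _ + X](exchange_big) /= -big_split /=; apply: eq_bigr => i _.
  rewrite hsumr -big_split /=; apply: eq_bigr => j _.
  by rewrite !hZl !hZr !mulrA -mulrDl -!rmorphM -rmorphD cond rmorphM.
rewrite key.
have -> : \sum_i h x0 ((cb i)%:C *: l i) = \sum_i (cb i)%:C * h x0 (l i).
  by apply: eq_bigr => i _; rewrite hZr.
have -> : \sum_i h ((cb i)%:C *: k i) z0 = \sum_i (cb i)%:C * h (k i) z0.
  by apply: eq_bigr => i _; rewrite hZl.
under [in RHS]eq_bigr do rewrite !mulrDr.
rewrite !big_split /=.
ring.
Qed.
End RK.

Section Aux.
Variable R : realType.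
Implicit Types (p q : nat).

Lemma cmxE p q (U : 'M[R]_(p, q)) j k : cmx U j k = (U j k)%:C.
Proof. by rewrite /cmx mxE. Qed.

Lemma cmxD p q (U W : 'M[R]_(p, q)) : cmx (U + W) = cmx U + cmx W.
Proof. by apply/matrixP => j k; rewrite !mxE /toC rmorphD. Qed.

Lemma cmxN p q (U : 'M[R]_(p, q)) : cmx (- U) = - cmx U.
Proof. by apply/matrixP => j k; rewrite !mxE /toC rmorphN. Qed.

Lemma cmxB p q (U W : 'M[R]_(p, q)) : cmx (U - W) = cmx U - cmx W.
Proof. by rewrite cmxD cmxN. Qed.

Lemma cmx0 p q : cmx (0 : 'M[R]_(p, q)) = 0.
Proof. by apply/matrixP => j k; rewrite !mxE /toC rmorph0. Qed.

Lemma cmxZ p q (r : R) (U : 'M[R]_(p, q)) : cmx (r *: U) = r%:C *: cmx U.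
Proof. by apply/matrixP => j k; rewrite !mxE /toC rmorphM. Qed.

Lemma cmx_sum p q s (F : 'I_s -> 'M[R]_(p, q)) :
  cmx (\sum_i F i) = \sum_i cmx (F i).
Proof. by rewrite (big_morph _ (@cmxD p q) (@cmx0 p q)). Qed.

Lemma cmxM p q r (U : 'M[R]_(p, q)) (W : 'M[R]_(q, r)) :
  cmx (U *m W) = cmx U *m cmx W.
Proof.
apply/matrixP => j k; rewrite !mxE /toC rmorph_sum; apply: eq_bigr => l _.
by rewrite !mxE rmorphM.
Qed.

Lemma cmx_tr p q (U : 'M[R]_(p, q)) : (cmx U)^T = cmx U^T.
Proof. by apply/matrixP => j k; rewrite !mxE. Qed.

Lemma cconj_cmx p q (U : 'M[R]_(p, q)) : cconj_mx (cmx U) = cmx U.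
Proof. by apply/matrixP => j k; rewrite !mxE /toC conjc_real. Qed.

Lemma cconjD p q (U W : 'M[R[i]]_(p, q)) : cconj_mx (U + W) = cconj_mx U + cconj_mx W.
Proof. by apply/matrixP => j k; rewrite !mxE rmorphD. Qed.

Lemma cconjM p q r (U : 'M[R[i]]_(p, q)) (W : 'M[R[i]]_(q, r)) :
  cconj_mx (U *m W) = cconj_mx U *m cconj_mx W.
Proof.
apply/matrixP => j k; rewrite !mxE rmorph_sum; apply: eq_bigr => l _.
by rewrite !mxE rmorphM.
Qed.

Lemma cconj_tr p q (U : 'M[R[i]]_(p, q)) : (cconj_mx U)^T = cconj_mx U^T.
Proof. by apply/matrixP => j k; rewrite !mxE. Qed.

Lemma D2_sym (a b : R) p : (D2 a b p)^T = D2 a b p.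
Proof.
apply/matrixP => j k; rewrite !mxE eq_sym; case: eqP => // _.
rewrite addnAC addnC addnA; congr (_ / _).
rewrite -sqrrN -sinN; congr (sin _ ^+ 2).
rewrite -mulrN -mulNr opprB //.
Qed.

Lemma lapC_cmx (a b c d : R) p q (U : 'M[R]_(p, q)) :
  lapC a b c d (cmx U) = cmx (lapR a b c d U).
Proof. by rewrite /lapC /lapR cmxD !cmxM cmx_tr. Qed.

End Aux.

Section IP.
Variable R : realType.
Variables (hx hy : R) (p q : nat).
Local Notation V := 'M[R[i]]_(p, q).
Local Notation ip := (@ip_h R hx hy p q).

Lemma nconj_real (r : R) : Num.conj (r%:C) = r%:C.
Proof. exact: conjc_real. Qed.
Lemma nconjM (x y : R[i]) : Num.conj (x * y) = Num.conj x * Num.conj y.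
Proof. exact: rmorphM. Qed.
Lemma nconjD (x y : R[i]) : Num.conj (x + y) = Num.conj x + Num.conj y.
Proof. exact: rmorphD. Qed.
Lemma nconjN (x : R[i]) : Num.conj (- x) = - Num.conj x.
Proof. exact: rmorphN. Qed.
Lemma nconjK (x : R[i]) : Num.conj (Num.conj x) = x.
Proof. exact: conjCK. Qed.
Lemma nconj_sum s (F : 'I_s -> R[i]) : Num.conj (\sum_i F i) = \sum_i Num.conj (F i).
Proof. exact: rmorph_sum. Qed.

Lemma ip_tr (U W : V) : ip U W = (hx * hy)%:C * \tr (U *m (cconj_mx W)^T).
Proof.
rewrite /ip_h /mxtrace; congr (_ * _); apply: eq_bigr => j _; rewrite mxE.
by apply: eq_bigr => k _; rewrite !mxE.
Qed.

Lemma ipDl (U U' W : V) : ip (U + U') W = ip U W + ip U' W.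
Proof.
rewrite /ip_h -mulrDr -big_split; congr (_ * _); apply: eq_bigr => j _.
by rewrite -big_split; apply: eq_bigr => k _; rewrite mxE mulrDl.
Qed.

Lemma ipDr (U W W' : V) : ip U (W + W') = ip U W + ip U W'.
Proof.
rewrite /ip_h -mulrDr -big_split; congr (_ * _); apply: eq_bigr => j _.
by rewrite -big_split; apply: eq_bigr => k _; rewrite mxE rmorphD mulrDr.
Qed.

Lemma ipZl (z : R[i]) (U W : V) : ip (z *: U) W = z * ip U W.
Proof.
rewrite /ip_h [RHS]mulrCA [in RHS]mulr_sumr; congr (_ * _); apply: eq_bigr => j _.
by rewrite mulr_sumr; apply: eq_bigr => k _; rewrite mxE mulrA.
Qed.

Lemma ipZr (z : R[i]) (U W : V) : ip U (z *: W) = Num.conj z * ip U W.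
Proof.
rewrite /ip_h [RHS]mulrCA [in RHS]mulr_sumr; congr (_ * _); apply: eq_bigr => j _.
by rewrite mulr_sumr; apply: eq_bigr => k _; rewrite mxE rmorphM mulrCA.
Qed.

Lemma ipNl (U W : V) : ip (- U) W = - ip U W.
Proof. by rewrite -scaleN1r ipZl mulN1r. Qed.

Lemma ipNr (U W : V) : ip U (- W) = - ip U W.
Proof. by rewrite -scaleN1r ipZr rmorphN1 mulN1r. Qed.

Lemma ipBl (U U' W : V) : ip (U - U') W = ip U W - ip U' W.
Proof. by rewrite ipDl ipNl. Qed.

Lemma ipBr (U W W' : V) : ip U (W - W') = ip U W - ip U W'.
Proof. by rewrite ipDr ipNr. Qed.

Lemma ipRr (r : R) (U W : V) : ip U (r%:C *: W) = r%:C * ip U W.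
Proof. by rewrite ipZr nconj_real. Qed.

Lemma ip_conj (U W : V) : ip W U = Num.conj (ip U W).
Proof.
rewrite /ip_h nconjM nconj_real nconj_sum; congr (_ * _); apply: eq_bigr => j _.
by rewrite nconj_sum; apply: eq_bigr => k _; rewrite nconjM nconjK mulrC.
Qed.

Lemma ip_real (U W : 'M[R]_(p, q)) : ip (cmx U) (cmx W) = ip (cmx W) (cmx U).
Proof.
rewrite /ip_h; congr (_ * _); apply: eq_bigr => j _.
by apply: eq_bigr => k _; rewrite !mxE /toC !nconj_real mulrC.
Qed.

Variables (a b c d : R).
Local Notation L := (lapC a b c d).

Lemma lapCD (X Y : V) : L (X + Y) = L X + L Y.
Proof. by rewrite /lapC mulmxDr mulmxDl addrACA. Qed.

Lemma lapCZ (z : R[i]) (X : V) : L (z *: X) = z *: L X.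
Proof. by rewrite /lapC scalerDr -scalemxAl -scalemxAr. Qed.

Lemma lapC_adj (X Y : V) : ip (L X) Y = ip X (L Y).
Proof.
rewrite !ip_tr; congr (_ * _); rewrite /lapC !cmx_tr !D2_sym.
set P := cmx _; set Q := cmx _.
rewrite cconjD !cconjM !cconj_cmx linearD /= !trmx_mul /P /Q !cmx_tr !D2_sym -/P -/Q.
rewrite mulmxDl mulmxDr !mxtraceD; congr (_ + _).
  by rewrite -mulmxA mxtrace_mulC mulmxA.
by rewrite !mulmxA.
Qed.

End IP.

Section Stage.
Variable R : realType.
Variables (hx hy : R) (p q : nat).
Local Notation V := 'M[R[i]]_(p, q).
Local Notation ip := (@ip_h R hx hy p q).
Variables (a b c d eps : R).
Local Notation L := (lapC a b c d).

Lemma nconj_i : Num.conj 'i = - 'i :> R[i].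
Proof. by apply/eqP; rewrite eq_complex /= oppr0 !eqxx. Qed.

Lemma twoRe (z : R[i]) : (2 * complex.Re z)%:C = z + Num.conj z.
Proof. by rewrite rmorphM rmorph_nat [RHS]addcJ. Qed.

Lemma stageE_zero (Y : V) (Nr : 'M[R]_(p, q)) :
  let G := L Y - (eps ^+ 2)%:C *: L (L Y) in
  let K := 'i *: (G - emul (cmx Nr) Y) in
  ip K Y + ip Y K = 0.
Proof.
move=> G K.
have hGY : ip G Y = ip Y G.
  rewrite /G ipBl ipBr ipZl ipRr [ip (L (L Y)) Y]lapC_adj [ip (L Y) (L Y)]lapC_adj.
  by rewrite [ip (L Y) Y]lapC_adj.
have hMY : ip (emul (cmx Nr) Y) Y = ip Y (emul (cmx Nr) Y).
  rewrite /ip_h; congr (_ * _); apply: eq_bigr => j _; apply: eq_bigr => k _.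
  by rewrite !mxE nconjM nconj_real; ring.
rewrite /K ipZl ipZr nconj_i ipBl ipBr hGY hMY; ring.
Qed.

Lemma stageH_zero (Y K1 : V) (Nr vr Qr k4r : 'M[R]_(p, q)) :
  K1 = 'i *: (L Y - (eps ^+ 2)%:C *: L (L Y) - emul (cmx Nr) Y) ->
  k4r = \matrix_(j, k) (2 * complex.Re (Num.conj (Y j k) * K1 j k)) ->
  let N := cmx Nr in let v := cmx vr in let Q := cmx Qr in
  let K2 := L v in let K3 := N - (eps ^+ 2)%:C *: L N + Q in
  let K4 := cmx k4r in
  (ip (L K1) Y + ip (L Y) K1) - (eps ^+ 2)%:C * (ip (L K1) (L Y) + ip (L Y) (L K1))
  - (1 / 2)%:C * (ip K2 N + ip N K2) + (eps ^+ 2 / 2)%:C * (ip (L K2) N + ip (L N) K2)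
  - (ip K2 Q + ip N K4) + (1 / 2)%:C * (ip (L K3) v + ip (L v) K3) = 0.
Proof.
move=> hK1 hk4 N v Q K2 K3 K4.
set G := L Y - (eps ^+ 2)%:C *: L (L Y).
have hE : (ip (L K1) Y + ip (L Y) K1)
    - (eps ^+ 2)%:C * (ip (L K1) (L Y) + ip (L Y) (L K1)) = ip N K4.
  rewrite [ip (L K1) Y]lapC_adj [ip (L K1) (L Y)]lapC_adj -[ip (L Y) (L K1)]lapC_adj.
  have -> : ip K1 (L Y) + ip (L Y) K1 - (eps ^+ 2)%:C * (ip K1 (L (L Y)) + ip (L (L Y)) K1)
      = ip K1 G + ip G K1.
    by rewrite /G ipBr ipRr ipBl ipZl; ring.
  rewrite /ip_h -mulrDr -big_split; congr (_ * _); apply: eq_bigr => j _.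
  rewrite -big_split; apply: eq_bigr => k _ /=.
  rewrite /K4 /N !cmxE nconj_real hk4 !mxE twoRe hK1 !mxE /toC.
  rewrite !(nconjM, nconjD, nconjN, nconj_i, nconjK, nconj_real).
  ring.
rewrite hE.
rewrite [ip (L K2) N]lapC_adj [ip (L K3) v]lapC_adj.
rewrite /K3 /K2 /N /v /Q !lapC_cmx.
rewrite !(ipDl, ipDr, ipBl, ipBr, ipNl, ipNr, ipZl, ipRr).
rewrite [ip (cmx Nr) (cmx (lapR a b c d vr))]ip_real.
rewrite [ip (cmx (lapR a b c d Nr)) (cmx (lapR a b c d vr))]ip_real.
rewrite [ip (cmx Qr) (cmx (lapR a b c d vr))]ip_real.
have h2 : (2 : R[i]) != 0 by rewrite pnatr_eq0.
rewrite !rmorphM rmorph1 fmorphV rmorph_nat.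
by field; rewrite ?h2.
Qed.

End Stage.

Section Gen.
Variable R : realType.
Variables (p q : nat).
Local Notation V := 'M[R[i]]_(p, q).

Lemma rk_gen (h : V -> V -> R[i])
  (hDl : forall x y z, h (x + y) z = h x z + h y z)
  (hDr : forall x y z, h x (y + z) = h x y + h x z)
  (hZl : forall (r : R) x z, h (r%:C *: x) z = r%:C * h x z)
  (hZr : forall (r : R) x z, h x (r%:C *: z) = r%:C * h x z)
  (s : nat) (cb : 'I_s -> R) (ca : 'I_s -> 'I_s -> R)
  (cond : forall i j, cb i * ca i j + cb j * ca j i = cb i * cb j)
  (x0 z0 x1 z1 : V) (k l X Z : 'I_s -> V) :
  x1 = x0 + \sum_i (cb i)%:C *: k i -> z1 = z0 + \sum_i (cb i)%:C *: l i ->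
  (forall i, X i = x0 + \sum_j (ca i j)%:C *: k j) ->
  (forall i, Z i = z0 + \sum_j (ca i j)%:C *: l j) ->
  h x1 z1 = h x0 z0 + \sum_i (cb i)%:C * (h (k i) (Z i) + h (X i) (l i)).
Proof.
move=> -> -> hX hZ.
rewrite (eq_bigr (fun i => (cb i)%:C * (h (k i) (z0 + \sum_j (ca i j)%:C *: l j)
                        + h (x0 + \sum_j (ca i j)%:C *: k j) (l i)))); last first.
  by move=> i _; rewrite hX hZ.
by rewrite -(@rk_quad R p q h hDl hDr hZl hZr _ _ _ cond) [RHS]addrC subrK.
Qed.

Lemma rk_ip (hx hy : R) (F G : V -> V)
  (FD : forall x y, F (x + y) = F x + F y) (FZ : forall (r : R) x, F (r%:C *: x) = r%:C *: F x)
  (GD : forall x y, G (x + y) = G x + G y) (GZ : forall (r : R) x, G (r%:C *: x) = r%:C *: G x)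
  (s : nat) (cb : 'I_s -> R) (ca : 'I_s -> 'I_s -> R)
  (cond : forall i j, cb i * ca i j + cb j * ca j i = cb i * cb j)
  (x0 z0 x1 z1 : V) (k l X Z : 'I_s -> V) :
  x1 = x0 + \sum_i (cb i)%:C *: k i -> z1 = z0 + \sum_i (cb i)%:C *: l i ->
  (forall i, X i = x0 + \sum_j (ca i j)%:C *: k j) ->
  (forall i, Z i = z0 + \sum_j (ca i j)%:C *: l j) ->
  ip_h hx hy (F x1) (G z1) = ip_h hx hy (F x0) (G z0)
    + \sum_i (cb i)%:C * (ip_h hx hy (F (k i)) (G (Z i)) + ip_h hx hy (F (X i)) (G (l i))).
Proof.
move=> e1 e2 e3 e4.
have h1 : forall x y z, ip_h hx hy (F (x + y)) (G z) = ip_h hx hy (F x) (G z) + ip_h hx hy (F y) (G z).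
  by move=> x y z; rewrite FD ipDl.
have h2 : forall x y z, ip_h hx hy (F x) (G (y + z)) = ip_h hx hy (F x) (G y) + ip_h hx hy (F x) (G z).
  by move=> x y z; rewrite GD ipDr.
have h3 : forall (r : R) x z, ip_h hx hy (F (r%:C *: x)) (G z) = r%:C * ip_h hx hy (F x) (G z).
  by move=> r x z; rewrite FZ ipZl.
have h4 : forall (r : R) x z, ip_h hx hy (F x) (G (r%:C *: z)) = r%:C * ip_h hx hy (F x) (G z).
  by move=> r x z; rewrite GZ ipRr.
exact: (@rk_gen (fun x z => ip_h hx hy (F x) (G z)) h1 h2 h3 h4 _ _ _ cond _ _ _ _ _ _ _ _ e1 e2 e3 e4).
Qed.

Lemma cmx_upd s (x : 'M[R]_(p, q)) (cf : 'I_s -> R) (k : 'I_s -> 'M[R]_(p, q)) :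
  cmx (x + \sum_i cf i *: k i) = cmx x + \sum_i (cf i)%:C *: cmx (k i).
Proof. by rewrite cmxD cmx_sum; congr (_ + _); apply: eq_bigr => i _; rewrite cmxZ. Qed.

End Gen.

Section Comb.
Variable R : realType.

Lemma finish (al be ga x1 x2 x3 x4 x5 x6 S1 S2 S3 S4 S5 S6 : R[i]) :
  S1 - al * S2 - be * S3 + ga * S4 - S5 + be * S6 = 0 ->
  (x1 + S1) - al * (x2 + S2) - be * (x3 + S3) + ga * (x4 + S4) - (x5 + S5) + be * (x6 + S6)
  = x1 - al * x2 - be * x3 + ga * x4 - x5 + be * x6.
Proof. by move=> h; apply/eqP; rewrite -subr_eq0; apply/eqP; rewrite -h; ring. Qed.

Lemma combine s (al be ga : R[i]) (cf s1 s2 s3 s4 s5 s6 : 'I_s -> R[i]) :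
  (forall i, s1 i - al * s2 i - be * s3 i + ga * s4 i - s5 i + be * s6 i = 0) ->
  \sum_i cf i * s1 i - al * \sum_i cf i * s2 i - be * \sum_i cf i * s3 i
  + ga * \sum_i cf i * s4 i - \sum_i cf i * s5 i + be * \sum_i cf i * s6 i = 0.
Proof.
move=> h.
have : \sum_i (cf i * s1 i - al * (cf i * s2 i) - be * (cf i * s3 i)
  + ga * (cf i * s4 i) - cf i * s5 i + be * (cf i * s6 i)) = 0.
  by apply: big1 => i _; transitivity (cf i * (s1 i - al * s2 i - be * s3 i + ga * s4 i - s5 i + be * s6 i)); [ring | rewrite h mulr0].
by rewrite !(big_split, sumrB) /= !sumrN -!mulr_sumr.
Qed.
End Comb.

Theorem theorem3p3 (R : realType) (a b c d : R) (Nx Ny : nat)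
  (eps tau : R) (s : nat) (A : 'M[R]_s) (bw : 'I_s -> R) (J : nat)
  (E0 : R -> R -> R[i]) (N0 N1 : R -> R -> R)
  (E : nat -> 'M[R[i]]_(Nx, Ny)) (N v q : nat -> 'M[R]_(Nx, Ny))
  (En : nat -> 'I_s -> 'M[R[i]]_(Nx, Ny))
  (Nn vn : nat -> 'I_s -> 'M[R]_(Nx, Ny))
  (k1 : nat -> 'I_s -> 'M[R[i]]_(Nx, Ny))
  (k2 k3 k4 : nat -> 'I_s -> 'M[R]_(Nx, Ny)) :
  a < b -> c < d ->
  (0 < Nx)%N -> ~~ odd Nx -> (0 < Ny)%N -> ~~ odd Ny ->
  0 < eps -> 0 < tau ->
  (forall i j : 'I_s, bw i * A i j + bw j * A j i = bw i * bw j) ->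
  (* initial data *)
  E 0%N = grid a b c d Nx Ny E0 ->
  N 0%N = grid a b c d Nx Ny N0 ->
  lapR a b c d (v 0%N) = grid a b c d Nx Ny N1 ->
  \sum_(j < Nx) \sum_(k < Ny) v 0%N j k = 0 ->
  cmx (q 0%N) = abs2 (E 0%N) ->
  (* stage equations, assumed solved at every step *)
  (forall n, (n <= J)%N -> forall i : 'I_s,
     (En n i = E n + \sum_(j < s) (tau * A i j)%:C *: k1 n j) /\
         (k1 n i = 'i *: (lapC a b c d (En n i)
                         - (eps ^+ 2)%:C *: lapC a b c d (lapC a b c d (En n i))
                         - emul (cmx (Nn n i)) (En n i))) /\
         (Nn n i = N n + \sum_(j < s) (tau * A i j) *: k2 n j) /\
         (k2 n i = lapR a b c d (vn n i)) /\
         (vn n i = v n + \sum_(j < s) (tau * A i j) *: k3 n j) /\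
         (k3 n i = Nn n i - eps ^+ 2 *: lapR a b c d (Nn n i)
                  + q n + \sum_(j < s) (tau * A i j) *: k4 n j) /\
         (k4 n i = \matrix_(j0, k0)
                    (2 * complex.Re ((En n i j0 k0)^* * k1 n i j0 k0)))) ->
  (* update *)
  (forall n, (n <= J)%N ->
     [/\ E n.+1 = E n + \sum_(i < s) (tau * bw i)%:C *: k1 n i,
         N n.+1 = N n + \sum_(i < s) (tau * bw i) *: k2 n i,
         v n.+1 = v n + \sum_(i < s) (tau * bw i) *: k3 n i &
         q n.+1 = q n + \sum_(i < s) (tau * bw i) *: k4 n i]) ->
  forall n, (n <= J)%N ->
    let hx := (b - a) / Nx%:R in
    let hy := (d - c) / Ny%:R in
    [/\ ip_h hx hy (E n.+1) (E n.+1) = ip_h hx hy (E n) (E n),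
        cmx (q n) - abs2 (E n) = 0 &
        Ham a b c d eps (E n.+1) (N n.+1) (v n.+1)
        = Ham a b c d eps (E n) (N n) (v n)].
Proof.
move=> _ _ _ _ _ _ _ _ hcond _ _ _ _ hq0 hstage hupd n hn hx hy.
have cond : forall i j, (tau * bw i) * (tau * A i j) + (tau * bw j) * (tau * A j i)
    = (tau * bw i) * (tau * bw j).
  move=> i j; transitivity (tau ^+ 2 * (bw i * A i j + bw j * A j i)); first by ring.
  by rewrite hcond; ring.
have habs (X : 'M[R[i]]_(Nx, Ny)) j k : abs2 X j k = X j k * Num.conj (X j k).
  by rewrite /abs2 /emul !mxE.
have hq : forall m, (m <= J.+1)%N -> cmx (q m) = abs2 (E m).
  elim=> [|m IH] hm; first exact: hq0.
  have hmJ : (m <= J)%N by [].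
  have IH' := IH (leqW hmJ).
  case: (hupd m hmJ) => hEu _ _ hqu.
  apply/matrixP => j0 k0.
  pose h := fun X Z : 'M[R[i]]_(Nx, Ny) => X j0 k0 * Num.conj (Z j0 k0).
  have hD1 : forall x y z, h (x + y) z = h x z + h y z.
    by move=> x y z; rewrite /h mxE mulrDl.
  have hD2 : forall x y z, h x (y + z) = h x y + h x z.
    by move=> x y z; rewrite /h mxE nconjD mulrDr.
  have hZ1 : forall (r : R) x z, h (r%:C *: x) z = r%:C * h x z.
    by move=> r x z; rewrite /h mxE mulrA.
  have hZ2 : forall (r : R) x z, h x (r%:C *: z) = r%:C * h x z.
    by move=> r x z; rewrite /h mxE nconjM nconj_real mulrCA.
  have := @rk_gen R Nx Ny h hD1 hD2 hZ1 hZ2 s (fun i => tau * bw i) (fun i j => tau * A i j) cond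
    (E m) (E m) _ _ (k1 m) (k1 m) (En m) (En m) hEu hEu
    (fun i => proj1 (hstage m hmJ i)) (fun i => proj1 (hstage m hmJ i)).
  rewrite /h => e.
  rewrite hqu cmx_upd mxE IH' summxE !habs e; congr (_ + _).
  apply: eq_bigr => i _.
  case: (hstage m hmJ i) => _ [_ [_ [_ [_ [_ hk4]]]]].
  rewrite mxE cmxE hk4 mxE twoRe nconjM nconjK; ring.
have hEs := fun i => proj1 (hstage n hn i).
case: (hupd n hn) => hEu hNu hvu hqu.
split.
- have e := @rk_ip R Nx Ny hx hy id id (fun _ _ => erefl) (fun _ _ => erefl)
    (fun _ _ => erefl) (fun _ _ => erefl) s (fun i => tau * bw i) (fun i j => tau * A i j) cond
    (E n) (E n) _ _ (k1 n) (k1 n) (En n) (En n) hEu hEu hEs hEs.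
  rewrite /= in e; rewrite e big1 ?addr0 // => i _.
  case: (hstage n hn i) => _ [hk1 _].
  rewrite hk1 (_ : ip_h hx hy _ _ + ip_h hx hy _ _ = 0) ?mulr0 //.
  exact: stageE_zero.
- by rewrite hq ?subrr // leqW.
pose L := @lapC R a b c d Nx Ny.
pose Hq (X Nc vc Qc : 'M[R[i]]_(Nx, Ny)) :=
  ip_h hx hy (L X) X - (eps ^+ 2)%:C * ip_h hx hy (L X) (L X)
  - (1 / 2)%:C * ip_h hx hy Nc Nc + (eps ^+ 2 / 2)%:C * ip_h hx hy (L Nc) Nc
  - ip_h hx hy Nc Qc + (1 / 2)%:C * ip_h hx hy (L vc) vc.
have hHam m : Ham a b c d eps (E m) (N m) (v m)
    = Hq (E m) (cmx (N m)) (cmx (v m)) (abs2 (E m)).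
  by rewrite /Ham /Hq /L -!lapC_cmx.
rewrite !hHam -[abs2 (E n.+1)]hq // -[abs2 (E n)]hq ?leqW //.
have eN1 : cmx (N n.+1) = cmx (N n) + \sum_i (tau * bw i)%:C *: cmx (k2 n i).
  by rewrite hNu cmx_upd.
have ev1 : cmx (v n.+1) = cmx (v n) + \sum_i (tau * bw i)%:C *: cmx (k3 n i).
  by rewrite hvu cmx_upd.
have eq1 : cmx (q n.+1) = cmx (q n) + \sum_i (tau * bw i)%:C *: cmx (k4 n i).
  by rewrite hqu cmx_upd.
have eNs i : cmx (Nn n i) = cmx (N n) + \sum_j (tau * A i j)%:C *: cmx (k2 n j).
  by case: (hstage n hn i) => _ [_ [-> _]]; rewrite cmx_upd.
have evs i : cmx (vn n i) = cmx (v n) + \sum_j (tau * A i j)%:C *: cmx (k3 n j).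
  by case: (hstage n hn i) => _ [_ [_ [_ [-> _]]]]; rewrite cmx_upd.
pose Q i := cmx (q n + \sum_j (tau * A i j) *: k4 n j).
have eqs i : Q i = cmx (q n) + \sum_j (tau * A i j)%:C *: cmx (k4 n j).
  by rewrite /Q cmx_upd.
have LD : forall x y, L (x + y) = L x + L y by move=> x y; apply: lapCD.
have LZ : forall (r : R) x, L (r%:C *: x) = r%:C *: L x by move=> r x; apply: lapCZ.
have iD : forall x y : 'M[R[i]]_(Nx, Ny), id (x + y) = id x + id y by [].
have iZ : forall (r : R) (x : 'M[R[i]]_(Nx, Ny)), id (r%:C *: x) = r%:C *: id x by [].
pose cb := fun i => tau * bw i.
pose ca := fun i j => tau * A i j.
have e1 := @rk_ip R Nx Ny hx hy L id LD LZ iD iZ s cb ca cond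
  (E n) (E n) _ _ (k1 n) (k1 n) (En n) (En n) hEu hEu hEs hEs.
have e2 := @rk_ip R Nx Ny hx hy L L LD LZ LD LZ s cb ca cond
  (E n) (E n) _ _ (k1 n) (k1 n) (En n) (En n) hEu hEu hEs hEs.
have e3 := @rk_ip R Nx Ny hx hy id id iD iZ iD iZ s cb ca cond
  _ _ _ _ (fun i => cmx (k2 n i)) (fun i => cmx (k2 n i))
  (fun i => cmx (Nn n i)) (fun i => cmx (Nn n i)) eN1 eN1 eNs eNs.
have e4 := @rk_ip R Nx Ny hx hy L id LD LZ iD iZ s cb ca cond
  _ _ _ _ (fun i => cmx (k2 n i)) (fun i => cmx (k2 n i))
  (fun i => cmx (Nn n i)) (fun i => cmx (Nn n i)) eN1 eN1 eNs eNs.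
have e5 := @rk_ip R Nx Ny hx hy id id iD iZ iD iZ s cb ca cond
  _ _ _ _ (fun i => cmx (k2 n i)) (fun i => cmx (k4 n i))
  (fun i => cmx (Nn n i)) Q eN1 eq1 eNs eqs.
have e6 := @rk_ip R Nx Ny hx hy L id LD LZ iD iZ s cb ca cond
  _ _ _ _ (fun i => cmx (k3 n i)) (fun i => cmx (k3 n i))
  (fun i => cmx (vn n i)) (fun i => cmx (vn n i)) ev1 ev1 evs evs.
rewrite /= in e1 e2 e3 e4 e5 e6.
rewrite /Hq e1 e2 e3 e4 e5 e6.
apply: finish.
apply: combine => i.
case: (hstage n hn i) => _ [hk1 [_ [hk2 [_ [hk3 hk4]]]]].
have eK2 : cmx (k2 n i) = L (cmx (vn n i)) by rewrite hk2 /L lapC_cmx.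
have eK3 : cmx (k3 n i) = cmx (Nn n i) - (eps ^+ 2)%:C *: L (cmx (Nn n i)) + Q i.
  by rewrite hk3 /Q !cmxD cmxN cmxZ /L lapC_cmx !addrA.
rewrite eK3 eK2.
exact: (@stageH_zero R hx hy Nx Ny a b c d eps _ _ _ (vn n i) (q n + \sum_j (tau * A i j) *: k4 n j) _ hk1 hk4).
Qed.
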